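(* The normalizer of $\widehat{\operatorname{PC}^{+}_{\mathrm{rc}}}$ in $\widehat{\operatorname{PC}^{\bowtie}}$ is $\widehat{\operatorname{PC}^{+}_{\mathrm{rc}}}$.
   Context: $X=[0,1[$. $\widehat{\operatorname{PC}^{\bowtie}}$ is the group of bijections $X\to X$ continuous outside a finite subset; $\widehat{\operatorname{PC}^{+}}$ is the subgroup of those $h$ for which there is a finite partition of $X$ into intervals $[a,b[$ with $h$ continuous and increasing on each $]a,b[$; $\widehat{\operatorname{PC}^{+}_{\mathrm{rc}}}$ is the subgroup of right-continuous elements of $\widehat{\operatorname{PC}^{+}}$. *)

(* Defs.v *)
From Stdlib Require Import Reals List.
Open Scope R_scope.

(* X = [0,1[ ; maps of X are represented by functions R -> R, and all the
   predicates below only depend on their values on X. *)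
Definition inX (x : R) : Prop := 0 <= x < 1.

Definition bij_X (h : R -> R) : Prop :=
  (forall x, inX x -> inX (h x)) /\
  (forall x y, inX x -> inX y -> h x = h y -> x = y) /\
  (forall y, inX y -> exists x, inX x /\ h x = y).

Definition cont_at_X (h : R -> R) (x : R) : Prop :=
  forall eps, 0 < eps -> exists delta, 0 < delta /\
    forall y, inX y -> Rabs (y - x) < delta -> Rabs (h y - h x) < eps.

Definition right_cont_at_X (h : R -> R) (x : R) : Prop :=
  forall eps, 0 < eps -> exists delta, 0 < delta /\
    forall y, inX y -> x <= y -> y < x + delta -> Rabs (h y - h x) < eps.

Definition PC_bowtie (h : R -> R) : Prop :=
  bij_X h /\
  exists F : list R, forall x, inX x -> ~ In x F -> cont_at_X h x.

Definition PC_plus (h : R -> R) : Prop :=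
  PC_bowtie h /\
  exists (n : nat) (a : nat -> R),
    a 0%nat = 0 /\ a n = 1 /\
    (forall i, (i < n)%nat -> a i < a (S i)) /\
    (forall i, (i < n)%nat ->
       (forall x, a i < x < a (S i) -> cont_at_X h x) /\
       (forall x y, a i < x < a (S i) -> a i < y < a (S i) -> x < y -> h x < h y)).

Definition PC_rc (h : R -> R) : Prop :=
  PC_plus h /\ forall x, inX x -> right_cont_at_X h x.

Definition inverse_on_X (g ginv : R -> R) : Prop :=
  forall x, inX x -> inX (ginv x) /\ g (ginv x) = x /\ ginv (g x) = x.

Definition normalizes (H : (R -> R) -> Prop) (g : R -> R) : Prop :=
  forall ginv, inverse_on_X g ginv ->
    (forall k, H k -> H (fun x => g (k (ginv x)))) /\
    (forall k, H k -> H (fun x => ginv (k (g x)))).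

Definition normalizer_in_PC_bowtie (H : (R -> R) -> Prop) (g : R -> R) : Prop :=
  PC_bowtie g /\ normalizes H g.

(* Main.v *)
Require Import Defs.
From Stdlib Require Import Reals List Lra Lia Arith Classical IndefiniteDescription.
Open Scope R_scope.

Lemma Rabs_lt_iff x a : Rabs x < a <-> -a < x < a.
Proof. split. intro H. pose proof (Rabs_def2 x a H). lra. intros [H1 H2]. apply Rabs_def1; lra. Qed.

Lemma Rmin_pos a b : 0 < a -> 0 < b -> 0 < Rmin a b.
Proof. intros; apply Rmin_glb_lt; auto. Qed.

Definition R2 (h : R -> R) (p : R) : Prop :=
  exists d, 0 < d /\ forall t, p < t < p + d -> t < 1 -> h p < h t.

Definition Loc (h : R -> R) : Prop :=
  PC_bowtie h /\ forall p, inX p -> right_cont_at_X h p /\ R2 h p.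

Definition rcont (f : R -> R) (a b x : R) : Prop :=
  forall eps, 0 < eps -> exists delta, 0 < delta /\
    forall t, a <= t <= b -> Rabs (t - x) < delta -> Rabs (f t - f x) < eps.

Lemma cont_rcont f a b x : 0 <= a -> b < 1 -> cont_at_X f x -> rcont f a b x.
Proof.
  intros Ha Hb Hc eps He. destruct (Hc eps He) as [d [Hd H]].
  exists d; split; auto. intros t Ht Htx. apply H; auto. unfold inX; lra.
Qed.

Lemma rc_rcont f a b : 0 <= a -> b < 1 -> right_cont_at_X f a -> rcont f a b a.
Proof.
  intros Ha Hb Hc eps He. destruct (Hc eps He) as [d [Hd H]].
  exists d; split; auto. intros t Ht Htx. rewrite Rabs_lt_iff in Htx.
  apply H; unfold inX; lra.
Qed.

Lemma IVT_ab f a b c : a <= b -> (forall x, a <= x <= b -> rcont f a b x) ->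
  f a <= c <= f b -> exists x, a <= x <= b /\ f x = c.
Proof.
  intros Hab Hc [Hac Hcb].
  set (E := fun t => a <= t <= b /\ f t <= c).
  assert (Hb : bound E) by (exists b; intros t [Ht _]; lra).
  assert (He : exists t, E t) by (exists a; split; [lra| lra]).
  destruct (completeness E Hb He) as [s [Hub Hlub]].
  assert (Has : a <= s) by (apply Hub; split; lra).
  assert (Hsb : s <= b) by (apply Hlub; intros t [Ht _]; lra).
  exists s; split; [lra|].
  destruct (Rtotal_order (f s) c) as [Hlt|[Heq|Hgt]]; [exfalso| exact Heq | exfalso].
  - assert (Hsb' : s < b) by (destruct (Req_dec s b) as [->|]; lra).
    destruct (Hc s (conj Has Hsb) (c - f s)) as [d [Hd Hd']]; [lra|].
    pose proof (Rmin_l (s + d/2) b). pose proof (Rmin_r (s + d/2) b).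
    set (t := Rmin (s + d/2) b) in *.
    assert (Hst : s < t) by (apply Rmin_glb_lt; lra).
    assert (Et : E t).
    { split. fold t; lra.
      assert (Rabs (f t - f s) < c - f s).
      { apply Hd'. fold t; lra. rewrite Rabs_lt_iff. fold t; lra. }
      rewrite Rabs_lt_iff in H1. lra. }
    pose proof (Hub t Et). lra.
  - assert (Has' : a < s) by (destruct (Req_dec s a) as [->|]; lra).
    destruct (Hc s (conj Has Hsb) (f s - c)) as [d [Hd Hd']]; [lra|].
    assert (s <= Rmax a (s - d/2)).
    { apply Hlub. intros t [Ht1 Ht2].
      destruct (Rle_or_lt t (s - d/2)) as [Hl|Hl].
      - apply Rle_trans with (s - d/2); [lra| apply Rmax_r].
      - exfalso. assert (t <= s) by (apply Hub; split; assumption).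
        assert (Rabs (f t - f s) < f s - c).
        { apply Hd'. lra. rewrite Rabs_lt_iff; lra. }
        rewrite Rabs_lt_iff in H0. lra. }
    assert (Rmax a (s - d/2) < s) by (apply Rmax_lub_lt; lra). lra.
Qed.

Lemma Loc_inc h u v : Loc h -> 0 <= u -> v <= 1 ->
  (forall x, u < x < v -> cont_at_X h x) ->
  forall y z, u < y -> y < z -> z < v -> h y < h z.
Proof.
  intros [[[HX [Hinj Hsur]] _] HL] Hu Hv Hc y z Huy Hyz Hzv.
  destruct (Rlt_or_le (h y) (h z)) as [|Hle]; [assumption| exfalso].
  assert (Hne : h z < h y).
  { destruct (Req_dec (h z) (h y)) as [E|E]; [apply Hinj in E; unfold inX; lra | lra]. }
  set (E := fun t => y <= t <= z /\ h y <= h t).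
  assert (Hb : bound E) by (exists z; intros t [Ht _]; lra).
  assert (He : exists t, E t) by (exists y; split; lra).
  destruct (completeness E Hb He) as [s [Hub Hlub]].
  assert (Hys : y <= s) by (apply Hub; split; lra).
  assert (Hsz : s <= z) by (apply Hlub; intros t [Ht _]; lra).
  assert (Hs : h y <= h s).
  { destruct (Rlt_or_le (h s) (h y)) as [Hlt|]; [exfalso|assumption].
    assert (Hys' : y < s) by (destruct (Req_dec s y) as [->|]; lra).
    destruct (Hc s ltac:(lra) (h y - h s)) as [d [Hd Hd']]; [lra|].
    assert (s <= Rmax y (s - d/2)).
    { apply Hlub. intros t [Ht1 Ht2].
      destruct (Rle_or_lt t (s - d/2)) as [Hl|Hl].
      - apply Rle_trans with (s - d/2); [lra| apply Rmax_r].
      - exfalso. assert (t <= s) by (apply Hub; split; assumption).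
        assert (Rabs (h t - h s) < h y - h s).
        { apply Hd'. unfold inX; lra. rewrite Rabs_lt_iff; lra. }
        rewrite Rabs_lt_iff in H0. lra. }
    assert (Rmax y (s - d/2) < s) by (apply Rmax_lub_lt; lra). lra. }
  assert (Hsz' : s < z) by (destruct (Req_dec s z) as [->|]; lra).
  destruct (HL s) as [_ [d [Hd Hd']]]; [unfold inX; lra|].
  set (t := s + Rmin d (z - s) / 2).
  pose proof (Rmin_l d (z - s)). pose proof (Rmin_r d (z - s)).
  pose proof (Rmin_pos d (z - s) Hd ltac:(lra)).
  assert (Et : E t).
  { split. unfold t; lra. assert (h s < h t) by (apply Hd'; unfold t; lra). lra. }
  pose proof (Hub t Et). unfold t in *; lra.
Qed.

Lemma free_right (L : list R) x : exists d, 0 < d /\ forall s, In s L -> ~ (x < s < x + d).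
Proof.
  induction L as [|s L [d [Hd H]]].
  - exists 1; split; [lra| intros s []].
  - destruct (Rlt_or_le x s).
    + exists (Rmin d (s - x)). pose proof (Rmin_l d (s-x)); pose proof (Rmin_r d (s-x)).
      split. apply Rmin_glb_lt; lra.
      intros s0 [<-|Hin]. lra. intro; apply (H s0 Hin); lra.
    + exists d. split; auto. intros s0 [<-|Hin]. lra. apply H; auto.
Qed.

Lemma free_around (L : list R) x : ~ In x L ->
  exists d, 0 < d /\ forall s, In s L -> s <= x - d \/ x + d <= s.
Proof.
  induction L as [|s L IH]; intro Hn.
  - exists 1; split; [lra| intros s []].
  - destruct IH as [d [Hd H]]. intro; apply Hn; right; auto.
    assert (s <> x) by (intro; apply Hn; left; auto).
    destruct (Rlt_or_le x s).
    + exists (Rmin d (s - x)). pose proof (Rmin_l d (s-x)); pose proof (Rmin_r d (s-x)).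
      split. apply Rmin_glb_lt; lra.
      intros s0 [<-|Hin]. lra. destruct (H s0 Hin); lra.
    + exists (Rmin d (x - s)). pose proof (Rmin_l d (x-s)); pose proof (Rmin_r d (x-s)).
      split. apply Rmin_glb_lt; lra.
      intros s0 [<-|Hin]. lra. destruct (H s0 Hin); lra.
Qed.

Definition part (n : nat) (a : nat -> R) :=
  a 0%nat = 0 /\ a n = 1 /\ (forall i, (i < n)%nat -> a i < a (S i)).

Lemma part_mono n a : (forall i, (i < n)%nat -> a i < a (S i)) ->
  forall i j, (i <= j)%nat -> (j <= n)%nat -> a i <= a j.
Proof.
  intros H i j Hij. induction Hij; intro Hjn. lra.
  apply Rle_trans with (a m). apply IHHij; lia. left; apply H; lia.
Qed.

Lemma part_exists (L : list R) : exists n a, part n a /\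
  forall i, (i < n)%nat -> forall s, In s L -> ~ (a i < s < a (S i)).
Proof.
  induction L as [|s L [n [a [[H0 [Hn Hinc]] Hfree]]]].
  - exists 1%nat, (fun j => match j with O => 0 | _ => 1 end).
    split. split; [reflexivity| split; [reflexivity|]]. intros i Hi.
    assert (i = 0%nat) by lia. subst. lra.
    intros i _ s [].
  - destruct (classic (exists i, (i < n)%nat /\ a i < s < a (S i))) as [[i [Hi Hs]] | Hno].
    + set (a' := fun j => if le_lt_dec j i then a j else
                   if Nat.eq_dec j (S i) then s else a (pred j)).
      assert (E1 : forall j, (j <= i)%nat -> a' j = a j).
      { intros j Hj. unfold a'. destruct (le_lt_dec j i); [auto| lia]. }
      assert (E2 : a' (S i) = s).
      { unfold a'. destruct (le_lt_dec (S i) i); [lia|].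
        destruct (Nat.eq_dec (S i) (S i)); [auto| lia]. }
      assert (E3 : forall j, (S i < j)%nat -> a' j = a (pred j)).
      { intros j Hj. unfold a'. destruct (le_lt_dec j i); [lia|].
        destruct (Nat.eq_dec j (S i)); [lia| auto]. }
      pose proof (part_mono n a Hinc) as Hmono.
      exists (S n), a'. split; [split; [|split]|].
      * rewrite E1; [auto| lia].
      * rewrite E3; [simpl; auto| lia].
      * intros j Hj.
        destruct (lt_eq_lt_dec j i) as [[Hl|He]|Hg].
        -- rewrite !E1 by lia. apply Hinc; lia.
        -- subst j. rewrite E1 by lia. rewrite E2. lra.
        -- destruct (Nat.eq_dec j (S i)) as [->|Hne].
           ++ rewrite E2, E3 by lia. simpl. lra.
           ++ rewrite !E3 by lia. replace (pred (S j)) with (S (pred j)) by lia.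
              apply Hinc; lia.
      * intros j Hj s0 Hin.
        destruct (lt_eq_lt_dec j i) as [[Hl|He]|Hg].
        -- rewrite !E1 by lia. destruct Hin as [<-|Hin].
           ++ pose proof (Hmono (S j) i ltac:(lia) ltac:(lia)). lra.
           ++ apply Hfree; auto; lia.
        -- subst j. rewrite E1 by lia. rewrite E2. destruct Hin as [<-|Hin].
           ++ lra.
           ++ intro. apply (Hfree i Hi s0 Hin). lra.
        -- destruct (Nat.eq_dec j (S i)) as [->|Hne].
           ++ rewrite E2, E3 by lia. simpl. destruct Hin as [<-|Hin]. lra.
              intro. apply (Hfree i Hi s0 Hin). lra.
           ++ rewrite !E3 by lia. replace (pred (S j)) with (S (pred j)) by lia.
              destruct Hin as [<-|Hin].
              ** pose proof (Hmono (S i) (pred j) ltac:(lia) ltac:(lia)). lra.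
              ** apply Hfree; auto; lia.
    + exists n, a. split. split; auto. intros i Hi s0 [<-|Hin].
      intro; apply Hno; exists i; auto. apply Hfree; auto.
Qed.

Lemma part_cover n a : part n a -> forall x, inX x ->
  exists i, (i < n)%nat /\ a i <= x < a (S i).
Proof.
  intros [H0 [Hn Hinc]] x [Hx0 Hx1].
  assert (forall m, (m <= n)%nat -> x < a m -> exists i, (i < m)%nat /\ a i <= x < a (S i)).
  { induction m; intros Hm Hxm. rewrite H0 in Hxm; lra.
    destruct (Rlt_or_le x (a m)).
    - destruct IHm as [i [Hi Hi']]; [lia|auto|]. exists i; split; [lia|auto].
    - exists m; split; [lia| split; auto]. }
  destruct (H n (le_n n)) as [i [Hi Hi']]. rewrite Hn; auto. exists i; auto.
Qed.

Lemma Loc_to_PC h : Loc h -> PC_rc h.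
Proof.
  intros HL. pose proof HL as [[Hbij [F HF]] Hloc].
  destruct (part_exists F) as [n [a [[H0 [Hn Hinc]] Hfree]]].
  pose proof (part_mono n a Hinc) as Hmono.
  assert (Hc : forall i, (i < n)%nat -> forall x, a i < x < a (S i) -> cont_at_X h x).
  { intros i Hi x Hx. apply HF.
    - pose proof (Hmono 0%nat i ltac:(lia) ltac:(lia)).
      pose proof (Hmono (S i) n ltac:(lia) ltac:(lia)). unfold inX; lra.
    - intro Hin. apply (Hfree i Hi x Hin). lra. }
  split; [split; [split; [exact Hbij| exists F; exact HF] | ] | ].
  - exists n, a. split; [auto|split; [auto|split; [auto|]]].
    intros i Hi. split. apply Hc; auto.
    intros x y Hx Hy Hxy.
    pose proof (Hmono 0%nat i ltac:(lia) ltac:(lia)).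
    pose proof (Hmono (S i) n ltac:(lia) ltac:(lia)).
    apply (Loc_inc h (a i) (a (S i))); auto; try lra. apply Hc; auto.
  - intros x Hx; apply (Hloc x Hx).
Qed.

Lemma PC_to_Loc h : PC_rc h -> Loc h.
Proof.
  intros [[Hbow [n [a [H0 [Hn [Hinc Hpc]]]]]] Hrc]. split; auto. intros p Hp. split; auto.
  destruct (part_cover n a (conj H0 (conj Hn Hinc)) p Hp) as [i [Hi [Hai Hpi]]].
  destruct (Hpc i Hi) as [Hc Hmon].
  destruct Hbow as [[HX [Hinj _]] _].
  exists (a (S i) - p). split; [lra|]. intros t Ht Ht1.
  destruct (Req_dec p (a i)) as [Heq|Hne].
  - destruct (Rlt_or_le (h p) (h t)) as [|Hle]; [auto|exfalso].
    assert (Hlt : h t < h p).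
    { destruct (Req_dec (h t) (h p)) as [E|]; [|lra]. apply Hinj in E; unfold inX in *; lra. }
    destruct (Hrc p Hp (h p - h t)) as [d [Hd Hd']]; [lra|].
    pose proof (Rmin_l d (t - p)). pose proof (Rmin_r d (t - p)).
    pose proof (Rmin_pos d (t - p) Hd ltac:(lra)).
    set (m := Rmin d (t - p)) in *.
    assert (h (p + m/2) < h t) by (apply Hmon; lra).
    assert (HA : Rabs (h (p + m/2) - h p) < h p - h t) by (apply Hd'; unfold inX in *; lra).
    rewrite Rabs_lt_iff in HA. lra.
  - apply Hmon; lra.
Qed.

Lemma preimage_list h L : bij_X h -> exists P, forall x, inX x -> In (h x) L -> In x P.
Proof.
  intros [HX [Hinj Hsur]]. induction L as [|s L [P HP]].
  - exists nil. intros x _ [].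
  - destruct (classic (inX s)) as [Hs|Hs].
    + destruct (Hsur s Hs) as [x0 [Hx0 Hx0']]. exists (x0 :: P).
      intros x Hx [E|Hin]. left. apply Hinj; auto. congruence. right; auto.
    + exists P. intros x Hx [E|Hin]. exfalso; apply Hs; rewrite E; auto. auto.
Qed.

Lemma cont_comp h k x : (forall y, inX y -> inX (h y)) -> inX x -> cont_at_X h x ->
  cont_at_X k (h x) -> cont_at_X (fun y => k (h y)) x.
Proof.
  intros HX Hx Hh Hk eps He. destruct (Hk eps He) as [d1 [Hd1 H1]].
  destruct (Hh d1 Hd1) as [d2 [Hd2 H2]]. exists d2; split; [auto|].
  intros y Hy Hyx. apply H1; auto.
Qed.

Lemma Loc_comp h k : Loc h -> Loc k -> Loc (fun x => k (h x)).
Proof.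
  intros [[[HXh [Hih Hsh]] [Fh HFh]] HLh] [[[HXk [Hik Hsk]] [Fk HFk]] HLk].
  destruct (preimage_list h Fk (conj HXh (conj Hih Hsh))) as [P HP].
  split; [split; [split; [|split]|]|].
  - intros x Hx; auto.
  - intros x y Hx Hy E. apply Hih; auto.
  - intros y Hy. destruct (Hsk y Hy) as [x1 [Hx1 E1]]. destruct (Hsh x1 Hx1) as [x [Hx E]].
    exists x; split; auto; congruence.
  - exists (Fh ++ P). intros x Hx Hn. apply cont_comp; auto.
    + apply HFh; auto. intro; apply Hn; apply in_or_app; auto.
    + apply HFk; auto. intro; apply Hn; apply in_or_app; right; auto.
  - intros x Hx. destruct (HLh x Hx) as [Hrh [d1 [Hd1 H1]]].
    destruct (HLk (h x) (HXh x Hx)) as [Hrk [d2 [Hd2 H2]]].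
    assert (Hge : exists d, 0 < d /\ forall t, inX t -> x <= t < x + d -> h x <= h t).
    { exists d1; split; auto. intros t Ht Ht'. destruct (Req_dec t x) as [->|]; [lra|].
      left; apply H1; unfold inX in *; lra. }
    destruct Hge as [d0 [Hd0 H0]].
    split.
    + intros eps He. destruct (Hrk eps He) as [dk [Hdk Hk]].
      destruct (Hrh dk Hdk) as [dh [Hdh Hh]].
      exists (Rmin dh d0). pose proof (Rmin_l dh d0). pose proof (Rmin_r dh d0).
      split. apply Rmin_pos; auto. intros y Hy Hxy Hy2.
      apply Hk; auto. apply H0; auto; lra.
      assert (HA : Rabs (h y - h x) < dk) by (apply Hh; auto; lra).
      rewrite Rabs_lt_iff in HA. lra.
    + destruct (Hrh d2 Hd2) as [dh [Hdh Hh]].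
      exists (Rmin dh d1). pose proof (Rmin_l dh d1). pose proof (Rmin_r dh d1).
      split. apply Rmin_pos; auto. intros t Ht Ht1.
      assert (Ht' : inX t) by (unfold inX in *; lra).
      assert (h x < h t) by (apply H1; auto; lra).
      assert (HA : Rabs (h t - h x) < d2) by (apply Hh; auto; lra).
      rewrite Rabs_lt_iff in HA. apply H2. lra. destruct (HXh t Ht'); lra.
Qed.

Lemma inv_right h hinv x : Loc h -> inverse_on_X h hinv -> inX x ->
  forall e, 0 < e -> exists d, 0 < d /\ forall y', inX y' -> h x <= y' < h x + d ->
    x <= hinv y' <= x + e.
Proof.
  intros [[[HX [Hinj Hsur]] [F HF]] HL] Hinv Hx e He.
  destruct (free_right F x) as [dF [HdF HF']].
  destruct (HL x Hx) as [Hrc [d2 [Hd2 H2]]].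
  assert (H1x : 0 < 1 - x) by (unfold inX in Hx; lra).
  pose proof (Rmin_l (Rmin e dF) (Rmin d2 (1 - x))).
  pose proof (Rmin_r (Rmin e dF) (Rmin d2 (1 - x))).
  pose proof (Rmin_l e dF). pose proof (Rmin_r e dF).
  pose proof (Rmin_l d2 (1 - x)). pose proof (Rmin_r d2 (1 - x)).
  assert (Hm : 0 < Rmin (Rmin e dF) (Rmin d2 (1 - x))) by (repeat apply Rmin_pos; auto).
  set (m := Rmin (Rmin e dF) (Rmin d2 (1 - x))) in *.
  set (b := x + m / 2).
  assert (Hb : h x < h b) by (apply H2; unfold b, inX in *; lra).
  exists (h b - h x). split; [lra|]. intros y' Hy' Hy'2.
  destruct (IVT_ab h x b y') as [x' [Hx' E]].
  - unfold b; lra.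
  - intros z Hz. destruct (Req_dec z x) as [->|Hzx].
    + apply rc_rcont; auto. unfold inX in Hx; lra. unfold b; lra.
    + apply cont_rcont. unfold inX in Hx; lra. unfold b; lra.
      apply HF. unfold inX in *; unfold b in *; lra.
      intro Hin. apply (HF' z Hin). unfold b in *; lra.
  - lra.
  - assert (Hx'X : inX x') by (unfold inX, b in *; lra).
    destruct (Hinv x' Hx'X) as [_ [_ E']]. rewrite <- E, E'. unfold b in *; lra.
Qed.

Lemma Loc_inv h hinv : Loc h -> inverse_on_X h hinv -> Loc hinv.
Proof.
  intros HLh Hinv. pose proof HLh as [[[HX [Hinj Hsur]] [F HF]] HL].
  split; [split; [split; [|split]|]|].
  - intros x Hx; apply Hinv; auto.
  - intros x y Hx Hy E. destruct (Hinv x Hx) as [_ [Ex _]]. destruct (Hinv y Hy) as [_ [Ey _]].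
    rewrite <- Ex, <- Ey, E; auto.
  - intros y Hy. exists (h y). split; auto. apply Hinv; auto.
  - exists (map h (0 :: F)). intros y Hy Hn.
    destruct (Hinv y Hy) as [Hx [Ey _]]. set (x := hinv y) in *.
    assert (Hx0 : x <> 0). { intro E0. apply Hn. rewrite <- Ey, E0. apply in_map. left; auto. }
    assert (HxF : ~ In x F). { intro Hin. apply Hn. rewrite <- Ey. apply in_map. right; auto. }
    destruct (free_around F x HxF) as [d0 [Hd0 Hfa]].
    assert (Hxx : 0 < x < 1) by (unfold inX in Hx; destruct Hx as [Hx1 Hx2]; destruct Hx1 as [|E0]; [lra| congruence]).
    pose proof (Rmin_l d0 (Rmin x (1 - x))). pose proof (Rmin_r d0 (Rmin x (1 - x))).
    pose proof (Rmin_l x (1 - x)). pose proof (Rmin_r x (1 - x)).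
    assert (Heta : 0 < Rmin d0 (Rmin x (1 - x))) by (repeat apply Rmin_pos; lra).
    set (eta := Rmin d0 (Rmin x (1 - x))) in *.
    assert (Hc : forall z, x - eta < z < x + eta -> cont_at_X h z).
    { intros z Hz. apply HF. unfold inX; lra. intro Hin. destruct (Hfa z Hin); lra. }
    assert (Hinc := Loc_inc h (x - eta) (x + eta) HLh ltac:(lra) ltac:(lra) Hc).
    intros eps He.
    pose proof (Rmin_l eps eta). pose proof (Rmin_r eps eta).
    assert (He' : 0 < Rmin eps eta) by (apply Rmin_pos; lra).
    set (e' := Rmin eps eta / 2).
    assert (Hlo : h (x - e') < h x) by (apply Hinc; unfold e'; lra).
    assert (Hhi : h x < h (x + e')) by (apply Hinc; unfold e'; lra).
    exists (Rmin (h (x + e') - y) (y - h (x - e'))).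
    pose proof (Rmin_l (h (x + e') - y) (y - h (x - e'))).
    pose proof (Rmin_r (h (x + e') - y) (y - h (x - e'))).
    split. apply Rmin_pos; lra.
    intros y' Hy' Hyy. rewrite Rabs_lt_iff in Hyy.
    destruct (IVT_ab h (x - e') (x + e') y') as [x' [Hx' E]].
    + unfold e'; lra.
    + intros z Hz. apply cont_rcont; unfold e' in *; try lra. apply Hc; lra.
    + lra.
    + assert (Hx'X : inX x') by (unfold inX, e' in *; lra).
      destruct (Hinv x' Hx'X) as [_ [_ E']]. rewrite <- E, E'. fold x.
      rewrite Rabs_lt_iff. unfold e' in *; lra.
  - intros y Hy. destruct (Hinv y Hy) as [Hx [Ey _]]. split.
    + intros eps He. destruct (inv_right h hinv (hinv y) HLh Hinv Hx (eps/2)) as [d [Hd H]]; [lra|].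
      exists d; split; auto. intros y' Hy' Hyy Hyy2. rewrite Ey in H.
      specialize (H y' Hy' ltac:(lra)). rewrite Rabs_lt_iff; lra.
    + destruct (inv_right h hinv (hinv y) HLh Hinv Hx 1) as [d [Hd H]]; [lra|].
      exists d; split; auto. intros t Ht Ht1. rewrite Ey in H.
      assert (HtX : inX t) by (unfold inX in *; lra).
      specialize (H t HtX ltac:(lra)).
      destruct (Req_dec (hinv y) (hinv t)) as [E|E]; [|lra].
      destruct (Hinv t HtX) as [_ [Et _]]. rewrite <- E, Ey in Et. lra.
Qed.

Definition swap (c l x : R) : R :=
  if Rle_dec c x then (if Rlt_dec x (c + l) then x + l
    else if Rlt_dec x (c + 2 * l) then x - l else x) else x.

Ltac swap_cases :=
  unfold swap; repeat match goal with
  | |- context [Rle_dec ?a ?b] => destruct (Rle_dec a b)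
  | |- context [Rlt_dec ?a ?b] => destruct (Rlt_dec a b) end.

Lemma swap_invol c l x : 0 < l -> swap c l (swap c l x) = x.
Proof. intro Hl. unfold swap at 2. swap_cases; lra. Qed.

Lemma swap_X c l x : 0 <= c -> 0 < l -> c + 2 * l < 1 -> inX x -> inX (swap c l x).
Proof. intros; unfold inX in *; swap_cases; lra. Qed.

Lemma swap_right c l p : 0 < l -> exists d C, 0 < d /\ forall t, p <= t < p + d -> swap c l t = t + C.
Proof.
  intro Hl. destruct (Rlt_or_le p c).
  - exists (c - p), 0. split; [lra|]. intros t Ht; swap_cases; lra.
  - destruct (Rlt_or_le p (c + l)).
    + exists (c + l - p), l. split; [lra|]. intros t Ht; swap_cases; lra.
    + destruct (Rlt_or_le p (c + 2 * l)).
      * exists (c + 2 * l - p), (- l). split; [lra|]. intros t Ht; swap_cases; lra.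
      * exists 1, 0. split; [lra|]. intros t Ht; swap_cases; lra.
Qed.

Lemma swap_two c l p : 0 < l -> ~ In p (c :: (c + l) :: (c + 2 * l) :: nil) ->
  exists d C, 0 < d /\ forall t, Rabs (t - p) < d -> swap c l t = t + C.
Proof.
  intros Hl Hn. assert (p <> c) by (intro; apply Hn; left; auto).
  assert (p <> c + l) by (intro; apply Hn; right; left; auto).
  assert (p <> c + 2 * l) by (intro; apply Hn; right; right; left; auto).
  destruct (Rlt_or_le p c).
  - exists (c - p), 0. split; [lra|]. intros t Ht; rewrite Rabs_lt_iff in Ht; swap_cases; lra.
  - destruct (Rlt_or_le p (c + l)).
    + exists (Rmin (p - c) (c + l - p)), l.
      pose proof (Rmin_l (p - c) (c + l - p)). pose proof (Rmin_r (p - c) (c + l - p)).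
      split; [apply Rmin_pos; lra|]. intros t Ht; rewrite Rabs_lt_iff in Ht; swap_cases; lra.
    + destruct (Rlt_or_le p (c + 2 * l)).
      * exists (Rmin (p - c - l) (c + 2 * l - p)), (- l).
        pose proof (Rmin_l (p - c - l) (c + 2 * l - p)). pose proof (Rmin_r (p - c - l) (c + 2 * l - p)).
        split; [apply Rmin_pos; lra|]. intros t Ht; rewrite Rabs_lt_iff in Ht; swap_cases; lra.
      * exists (p - c - 2 * l), 0. split; [lra|]. intros t Ht; rewrite Rabs_lt_iff in Ht; swap_cases; lra.
Qed.

Lemma swap_Loc c l : 0 <= c -> 0 < l -> c + 2 * l < 1 -> Loc (swap c l).
Proof.
  intros Hc Hl Hcl. split; [split; [split; [|split]|]|].
  - intros x Hx; apply swap_X; auto.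
  - intros x y Hx Hy E. rewrite <- (swap_invol c l x Hl), <- (swap_invol c l y Hl), E; auto.
  - intros y Hy. exists (swap c l y). split. apply swap_X; auto. apply swap_invol; auto.
  - exists (c :: (c + l) :: (c + 2 * l) :: nil). intros x Hx Hn.
    destruct (swap_two c l x Hl Hn) as [d [C [Hd H]]].
    intros eps He. exists (Rmin d eps). pose proof (Rmin_l d eps). pose proof (Rmin_r d eps).
    split. apply Rmin_pos; auto. intros y Hy Hyx.
    assert (Hy1 : Rabs (y - x) < d) by lra.
    assert (Hx1 : Rabs (x - x) < d) by (rewrite Rminus_diag, Rabs_R0; auto).
    rewrite (H y Hy1), (H x Hx1). replace (y + C - (x + C)) with (y - x) by ring. lra.
  - intros p Hp. destruct (swap_right c l p Hl) as [d [C [Hd H]]]. split.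
    + intros eps He. exists (Rmin d eps). pose proof (Rmin_l d eps). pose proof (Rmin_r d eps).
      split. apply Rmin_pos; auto. intros y Hy Hpy Hy2.
      rewrite (H y), (H p) by lra. rewrite Rabs_lt_iff; lra.
    + exists d. split; auto. intros t Ht _. rewrite (H t), (H p) by lra. lra.
Qed.

Lemma bij_inverse g : bij_X g -> exists ginv, inverse_on_X g ginv.
Proof.
  intros [HX [Hinj Hsur]].
  assert (H : forall y, exists x, inX y -> inX x /\ g x = y).
  { intro y. destruct (classic (inX y)) as [Hy|Hy].
    - destruct (Hsur y Hy) as [x Hx]; exists x; auto.
    - exists 0; intro; contradiction. }
  exists (fun y => proj1_sig (constructive_indefinite_description _ (H y))).
  intros x Hx. destruct (constructive_indefinite_description _ (H x)) as [z Hz]; simpl.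
  destruct (Hz Hx). split; auto. split; auto.
  destruct (constructive_indefinite_description _ (H (g x))) as [w Hw]; simpl.
  destruct (Hw (HX x Hx)). apply Hinj; auto.
Qed.

Lemma norm_Loc g : normalizer_in_PC_bowtie PC_rc g -> Loc g.
Proof.
  intros [Hbow Hnorm]. pose proof Hbow as [[HX [Hinj Hsur]] _].
  destruct (bij_inverse g (proj1 Hbow)) as [ginv Hinv].
  destruct (Hnorm ginv Hinv) as [_ H2].
  assert (Key : forall p, inX p -> forall e, 0 < e -> exists d, 0 < d /\
     forall t, inX t -> p <= t < p + d -> g p <= g t < g p + e).
  { intros p Hp e He.
    set (c := g p). assert (Hc : inX c) by (apply HX; auto).
    assert (Hl : 0 < Rmin (e / 4) ((1 - c) / 4)) by (apply Rmin_pos; unfold inX in Hc; lra).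
    pose proof (Rmin_l (e / 4) ((1 - c) / 4)). pose proof (Rmin_r (e / 4) ((1 - c) / 4)).
    set (l := Rmin (e / 4) ((1 - c) / 4)) in *.
    assert (Hk : PC_rc (swap c l)).
    { apply Loc_to_PC. apply swap_Loc; unfold inX in Hc; lra. }
    pose proof (H2 _ Hk) as Hcc.
    destruct Hcc as [_ Hrc]. specialize (Hrc p Hp).
    assert (Hsc : swap c l (g p) = c + l) by (fold c; swap_cases; lra).
    assert (HclX : inX (c + l)) by (unfold inX in *; lra).
    set (q := ginv (c + l)).
    assert (Hq : q <> p).
    { intro E. destruct (Hinv (c + l) HclX) as [_ [E' _]]. fold q in E'. rewrite E in E'.
      fold c in E'. lra. }
    assert (Hd : 0 < Rabs (q - p)) by (apply Rabs_pos_lt; lra).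
    set (d := Rabs (q - p)) in *.
    destruct (Hrc (d / 2)) as [d1 [Hd1 H1]]; [lra|].
    exists (Rmin d1 (d / 2)). pose proof (Rmin_l d1 (d / 2)). pose proof (Rmin_r d1 (d / 2)).
    split. apply Rmin_pos; lra.
    intros t Ht Hpt.
    destruct (classic (c <= g t < c + 2 * l)) as [Hin|Hout].
    - lra.
    - exfalso.
      assert (Hs : swap c l (g t) = g t) by (swap_cases; lra).
      specialize (H1 t Ht ltac:(lra) ltac:(lra)). simpl in H1.
      rewrite Hs, Hsc in H1. fold q in H1.
      destruct (Hinv t Ht) as [_ [_ E]]. rewrite E in H1.
      rewrite Rabs_lt_iff in H1. unfold d in *.
      unfold Rabs in *; destruct (Rcase_abs (q - p)); lra. }
  split; auto. intros p Hp. split.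
  - intros eps He. destruct (Key p Hp eps He) as [d [Hd H]]. exists d; split; auto.
    intros y Hy Hpy Hy2. specialize (H y Hy ltac:(lra)). rewrite Rabs_lt_iff; lra.
  - destruct (Key p Hp 1 ltac:(lra)) as [d [Hd H]]. exists d; split; auto.
    intros t Ht Ht1. assert (HtX : inX t) by (unfold inX in *; lra).
    specialize (H t HtX ltac:(lra)).
    destruct (Req_dec (g p) (g t)) as [E|]; [|lra].
    apply Hinj in E; auto; lra.
Qed.

Theorem proposition5p4 :
  forall g : R -> R, normalizer_in_PC_bowtie PC_rc g <-> PC_rc g.
Proof.
  intro g. split.
  - intro Hn. apply Loc_to_PC. apply norm_Loc; auto.
  - intro Hg. split. exact (proj1 (proj1 Hg)). intros ginv Hinv.
    pose proof (PC_to_Loc g Hg) as Lg. pose proof (Loc_inv g ginv Lg Hinv) as Lgi.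
    split; intros k Hk; apply Loc_to_PC; pose proof (PC_to_Loc k Hk) as HLk.
    + exact (Loc_comp (fun x => k (ginv x)) g (Loc_comp ginv k Lgi HLk) Lg).
    + exact (Loc_comp (fun x => k (g x)) ginv (Loc_comp g k Lg HLk) Lgi).
Qed.
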